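(* Let $F$ be an algebraically closed field, $m\geq 2$, $\beta=(m+\sqrt{m^2-4})/2$, and let $\mathbf d=(d_1,d_2)$ and $\mathbf e=(e_1,e_2)\neq(0,0)$ be pairs of non-negative integers with $\mathbf e\leq\mathbf d$ componentwise. If $d_2>\beta d_1$ and $\mathbf e\hookrightarrow\mathbf d$ (for the quiver $K(m)$), then $e_2>\beta e_1$.
   Context: $K(m)$ is the quiver with two vertices $1,2$ and $m$ arrows from $1$ to $2$; a representation of dimension vector $(d_1,d_2)$ is a tuple of linear maps $f_1,\ldots,f_m:V_1\to V_2$ with $\dim V_i=d_i$, and a subrepresentation of dimension vector $(e_1,e_2)$ is a pair of subspaces $U_1\subset V_1,U_2\subset V_2$ of dimensions $e_1,e_2$ with $f_k(U_1)\subset U_2$ for all $k$. One writes $\mathbf e\hookrightarrow\mathbf d$ if every representation of dimension vector $\mathbf d$ (equivalently, a general one, in the Zariski topology on the affine space of such representations) admits a subrepresentation of dimension vector $\mathbf e$. *)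

(* Defs.v *)
From HB Require Import structures.
From mathcomp Require Import all_boot all_order all_algebra all_field.
Set Implicit Arguments. Unset Strict Implicit. Unset Printing Implicit Defensive.
Import Order.TTheory GRing.Theory Num.Theory.
Local Open Scope ring_scope.

(* A representation of K(m) of dimension vector (d1,d2) over F: m linear maps
   V1 = F^d1 -> V2 = F^d2, encoded as matrices acting on row vectors
   (v |-> v *m f k). *)
Definition Kmrep (F : fieldType) (m d1 d2 : nat) := 'I_m -> 'M[F]_(d1, d2).

Definition has_subrep (F : fieldType) (m d1 d2 : nat) (f : Kmrep F m d1 d2)
    (e1 e2 : nat) : Prop :=
  exists (U1 : 'M[F]_d1) (U2 : 'M[F]_d2),
    [/\ \rank U1 = e1, \rank U2 = e2 & forall k : 'I_m, (U1 *m f k <= U2)%MS].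

Definition subrep_arrow (F : fieldType) (m e1 e2 d1 d2 : nat) : Prop :=
  forall f : Kmrep F m d1 d2, has_subrep f e1 e2.

Definition beta (m : nat) : algC :=
  ((m%:R + sqrtC ((m%:R : algC) ^+ 2 - 4)) / 2)%R.

(* Main.v *)
Require Import Defs.
From HB Require Import structures.
From mathcomp Require Import all_boot all_order all_algebra all_field.
From mathcomp Require Import ring.
Import Order.TTheory GRing.Theory Num.Theory.
Local Open Scope ring_scope.

Lemma beta_facts (m : nat) : (2 <= m)%N ->
  [/\ 1 <= beta m, 0 < m%:R - beta m & beta m * (m%:R - beta m) = 1].
Proof.
move=> m2.
set s := sqrtC ((m%:R : algC) ^+ 2 - 4).
have h4 : (m%:R : algC) ^+ 2 - 4 = (m ^ 2 - 4)%:R.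
  rewrite natrB; last by rewrite (@leq_exp2r 2 m 2).
  by rewrite natrX.
have s0 : 0 <= s by rewrite /s sqrtC_ge0 h4 ler0n.
have s2 : s ^+ 2 = (m%:R : algC) ^+ 2 - 4 by rewrite /s sqrtCK.
have m0 : (0 : algC) <= m%:R by rewrite ler0n.
have sm : s < m%:R.
  rewrite -(ltr_pXn2r (_ : (0 < 2)%N)) ?nnegrE // s2.
  by rewrite ltrBlDr ltrDl ltr0n.
have hb : beta m = (m%:R + s) / 2 by rewrite /beta.
split.
- rewrite hb ler_pdivlMr ?ltr0n // mul1r.
  rewrite -[X in X <= _]addr0; apply: lerD => //; by rewrite (ler_nat _ 2).
- rewrite hb subr_gt0 ltr_pdivrMr ?ltr0n // -natrM mulnC natrM mulr2n mulrDl mul1r.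
  by rewrite ltrD2l.
- rewrite hb.
  have -> : (m%:R + s) / 2 * (m%:R - (m%:R + s) / 2) = ((m%:R:algC)^+2 - s^+2) / 4.
    by field; rewrite ?pnatr_eq0.
  by rewrite s2 opprB addrC subrK mulfV // pnatr_eq0.
Qed.

Lemma ineq_a (m d1 d2 : nat) : (2 <= m)%N -> beta m * d1%:R < d2%:R -> (d1 < d2)%N.
Proof.
move=> m2 h; have [b1 _ _] := @beta_facts m m2.
rewrite -(ltr_nat algC); apply: le_lt_trans h.
by rewrite ler_peMl // ler0n.
Qed.

Lemma ineq_b (m d1 d2 : nat) : (2 <= m)%N -> beta m * d1%:R < d2%:R ->
  (d2 <= m * d1)%N -> beta m * (m * d1 - d2)%N%:R < d1%:R.
Proof.
move=> m2 h hle; have [b1 mb hb] := @beta_facts m m2.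
set b := beta m in h b1 mb hb *.
rewrite natrB // natrM -subr_gt0.
have -> : (d1%:R - b * (m%:R * d1%:R - d2%:R) : algC)
   = b * (d2%:R - b * d1%:R) + (1 - b * (m%:R - b)) * d1%:R by ring.
rewrite hb subrr mul0r addr0 mulr_gt0 ?subr_gt0 //.
by apply: lt_le_trans b1.
Qed.

Lemma ineq_c (m r c e : nat) : (2 <= m)%N -> (r + c = m * e)%N -> (0 < e)%N ->
  (c = 0%N \/ beta m * c%:R < e%:R) -> beta m * e%:R < r%:R.
Proof.
move=> m2 hrc e0 hc; have [b1 mb hb] := @beta_facts m m2.
set b := beta m in hc b1 mb hb *.
have hr : (r%:R : algC) = m%:R * e%:R - c%:R.
  by rewrite -natrM -hrc natrD addrK.
rewrite hr -subr_gt0.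
case: hc => [-> | hc].
  have -> : (m%:R * e%:R - 0%:R - b * e%:R : algC) = (m%:R - b) * e%:R by ring.
  by rewrite mulr_gt0 // ltr0n.
have -> : (m%:R * e%:R - c%:R - b * e%:R : algC)
   = (m%:R - b) * (e%:R - b * c%:R) + (b * (m%:R - b) - 1) * c%:R by ring.
by rewrite hb subrr mul0r addr0 mulr_gt0 // subr_gt0.
Qed.

Set Implicit Arguments. Unset Strict Implicit. Unset Printing Implicit Defensive.

Definition Eb (F : fieldType) (m d : nat) (k : 'I_m) : 'M[F]_(d, m * d) :=
  \matrix_(a, i) (i == mxvec_index k a)%:R.
Arguments Eb {F m} d k.

Lemma idx_inj m d (k j : 'I_m) (a b : 'I_d) :
  (mxvec_index k a == mxvec_index j b) = (k == j) && (a == b).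
Proof.
apply/eqP/andP => [|[/eqP -> /eqP ->] //].
by move/cast_ord_inj/enum_rank_inj => [-> ->].
Qed.

Lemma EbP (F : fieldType) m d (k j : 'I_m) :
  Eb d k *m (Eb d j)^T = if k == j then 1%:M else 0 :> 'M[F]_d.
Proof.
apply/matrixP => a b; rewrite !mxE (bigD1 (mxvec_index k a)) //= big1 => [|i /negPf ne].
  rewrite !mxE eqxx mul1r addr0 idx_inj.
  by case: (k == j); rewrite ?mxE //= eq_sym.
by rewrite !mxE ne mul0r.
Qed.

Lemma EbK (F : fieldType) m d (k : 'I_m) p (U : 'M[F]_(p, d)) :
  U *m Eb d k *m (Eb d k)^T = U.
Proof. by rewrite -mulmxA EbP eqxx mulmx1. Qed.

Lemma rank_UE (F : fieldType) m d (k : 'I_m) p (U : 'M[F]_(p, d)) :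
  \rank (U *m Eb d k) = \rank U.
Proof.
apply/eqP; rewrite eqn_leq mxrankM_maxl /=.
by rewrite -{1}(EbK k U) mxrankM_maxl.
Qed.

Lemma sumE_proj (F : fieldType) m d p (U : 'M[F]_(p, d)) (j : 'I_m) (P : pred 'I_m) :
  ((\sum_(k | P k) <<U *m Eb d k>>)%MS *m (Eb d j)^T <= if P j then U else 0)%MS.
Proof.
rewrite sumsmxMr_gen.
apply/sumsmx_subP => k Pk; rewrite genmxE.
rewrite (eqmxMr _ (genmxE (U *m Eb d k))) -mulmxA EbP.
case: (k =P j) => [kj | _]; first by rewrite -kj Pk mulmx1.
by rewrite mulmx0 sub0mx.
Qed.

Lemma rank_sumE (F : fieldType) m d p (U : 'M[F]_(p, d)) :
  \rank (\sum_(k < m) <<U *m Eb d k>>)%MS = (m * \rank U)%N.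
Proof.
have dx : mxdirect (\sum_(k < m) <<U *m Eb d k>>)%MS.
  apply/mxdirect_sumsP => i _; apply/eqP; rewrite -submx0.
  set Z := (_ :&: _)%MS.
  have Z1 : (Z <= U *m Eb d i)%MS by rewrite -(genmxE (U *m _)) capmxSl.
  have Z2 : (Z *m (Eb d i)^T <= (0 : 'M_(p, d)))%MS.
    have H := sumE_proj U i (fun j => (true && (j != i))).
    rewrite /= eqxx /= in H; apply: submx_trans H; apply: submxMr; exact: capmxSr.
  have [V defZ] := submxP Z1.
  rewrite defZ -mulmxA EbK in Z2; rewrite defZ mulmxA (submx0null Z2) mul0mx.
  exact: submx_refl.
rewrite (mxdirectP dx) /=.
under eq_bigr do rewrite mxrank_gen rank_UE.
by rewrite sum_nat_const card_ord.
Qed.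

Definition img (F : fieldType) m p d N (U : 'M[F]_(p, d)) (f : 'I_m -> 'M[F]_(d, N))
  : 'M[F]_N := (\sum_(k < m) <<U *m f k>>)%MS.

Definition good (F : fieldType) m d N (f : 'I_m -> 'M[F]_(d, N)) :=
  forall p (U : 'M[F]_(p, d)), (0 < \rank U)%N ->
    beta m * (\rank U)%:R < (\rank (img U f))%:R.

Lemma img_sub (F : fieldType) m p d N q (U : 'M[F]_(p, d)) (f : 'I_m -> 'M[F]_(d, N))
  (W : 'M[F]_(q, N)) : (forall k, U *m f k <= W)%MS -> (img U f <= W)%MS.
Proof. by move=> h; apply/sumsmx_subP => k _; rewrite genmxE. Qed.

Lemma img_mul (F : fieldType) m p d N N' (U : 'M[F]_(p, d)) (f : 'I_m -> 'M[F]_(d, N))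
  (M : 'M[F]_(N, N')) : (img U f *m M :=: img U (fun k => f k *m M))%MS.
Proof.
apply: eqmx_trans (sumsmxMr_gen _ _ _) _; apply: eqmx_sums => k _.
apply: eqmx_trans (genmxE _) _; apply: eqmx_trans (eqmxMr _ (genmxE _)) _.
by rewrite mulmxA; apply: eqmx_sym; apply: genmxE.
Qed.

Lemma good0 (F : fieldType) m N (f : 'I_m -> 'M[F]_(0, N)) : good f.
Proof. by move=> p U; have := rank_leq_col U; rewrite leqn0 => /eqP ->. Qed.

Lemma compress (F : fieldType) m d N d2 q (h : 'I_m -> 'M[F]_(d, N)) (T : 'M[F]_(q, N)) :
  (forall k, h k <= T)%MS -> (\rank T <= d2)%N -> good h ->
  exists f : 'I_m -> 'M[F]_(d, d2), good f.
Proof.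
move=> hT rT gh.
pose B := row_base T.
pose M := pinvmx B *m (pid_mx (\rank T) : 'M[F]_(\rank T, d2)).
exists (fun k => h k *m M) => p U U0.
have -> : \rank (img U (fun k => h k *m M)) = \rank (img U h *m M).
  by rewrite (img_mul U h M).
have XB : (img U h <= B)%MS.
  rewrite eq_row_base; apply: img_sub => k; exact: submx_trans (submxMl _ _) (hT k).
have fr : row_free (pid_mx (\rank T) : 'M[F]_(\rank T, d2)).
  by rewrite /row_free rank_pid_mx.
rewrite /M mulmxA mxrankMfree //.
have -> : \rank (img U h *m pinvmx B) = \rank (img U h).
  apply/eqP; rewrite eqn_leq mxrankM_maxl /=.
  by rewrite -{1}(mulmxKpV XB) mxrankM_maxl.
exact: gh.
Qed.

Lemma Psi_proj (F : fieldType) m d a (g : 'I_m -> 'M[F]_(a, d)) (j : 'I_m) :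
  (\sum_(k < m) g k *m Eb d k) *m (Eb d j)^T = g j.
Proof.
rewrite mulmx_suml (bigD1 j) //= big1 => [|k kj].
  by rewrite -mulmxA EbP eqxx mulmx1 addr0.
by rewrite -mulmxA EbP (negPf kj) mulmx0.
Qed.

Lemma reflect_good (F : fieldType) m d a (g : 'I_m -> 'M[F]_(a, d)) :
  (2 <= m)%N -> good g ->
  row_free (\sum_(k < m) g k *m Eb d k) /\
  good (fun k => Eb d k *m cokermx (\sum_(k < m) g k *m Eb d k)).
Proof.
move=> m2 gg; have [b1 mb hb] := @beta_facts m m2.
have b0 : 0 < beta m by apply: lt_le_trans b1.
set Psi := \sum_(k < m) g k *m Eb d k.
split.
  rewrite -kermx_eq0 -mxrank_eq0 eqn0Ngt; apply/negP => W0.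
  have := gg _ _ W0.
  have -> : img (kermx Psi) g = 0.
    apply/eqP; rewrite -submx0; apply: img_sub => k.
    by rewrite -(Psi_proj g k) mulmxA mulmx_ker mul0mx sub0mx.
  rewrite mxrank0 => h.
  have h2 : 0 < beta m * (\rank (kermx Psi))%:R by rewrite mulr_gt0 // ltr0n.
  by have := lt_trans h2 h; rewrite ltxx.
move=> p U U0.
set C := cokermx Psi.
set S := (\sum_(k < m) <<U *m Eb d k>>)%MS.
have -> : \rank (img U (fun k => Eb d k *m C)) = \rank (S *m C).
  by rewrite (img_mul U (fun k => Eb d k) C).
have rk := mxrank_mul_ker S C.
rewrite rank_sumE in rk.
apply: (@ineq_c m _ _ _ m2 rk U0).
set Y := (S :&: kermx C)%MS.
have YP : (Y <= Psi)%MS.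
  by rewrite submxE -/C -sub_kermx capmxSr.
pose X := Y *m pinvmx Psi.
have XP : X *m Psi = Y by rewrite mulmxKpV.
have cX : (\rank Y <= \rank X)%N by rewrite -{1}XP mxrankM_maxl.
case: (posnP (\rank X)) => [X0 | X0].
  by left; apply/eqP; rewrite -leqn0 -X0.
right; have := gg _ X X0.
have sU : (img X g <= U)%MS.
  apply: img_sub => k; rewrite -(Psi_proj g k) mulmxA XP.
  have := sumE_proj U k predT; rewrite /=.
  by apply: submx_trans; apply: submxMr; apply: capmxSl.
move=> h.
have h1 : beta m * (\rank Y)%:R <= beta m * (\rank X)%:R.
  by apply: ler_wpM2l; [exact: ltW | rewrite ler_nat].
have h2 : (\rank (img X g))%:R <= (\rank U)%:R :> algC.
  by rewrite ler_nat; exact: mxrankS.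
exact: le_lt_trans h1 (lt_le_trans h h2).
Qed.

Lemma exists_good (F : fieldType) m : (2 <= m)%N ->
  forall d2 d1, beta m * d1%:R < d2%:R -> exists f : 'I_m -> 'M[F]_(d1, d2), good f.
Proof.
move=> m2 d2; elim/ltn_ind: d2 => d2 IH d1 hd.
case: (leqP (m * d1) d2) => hle.
  pose g : 'I_m -> 'M[F]_(0, d1) := fun _ => 0.
  have [_ gh] := reflect_good m2 (good0 g).
  apply: (compress (T := cokermx (\sum_(k < m) g k *m Eb d1 k))) gh.
    by move=> k; exact: submxMl.
  exact: leq_trans (rank_leq_col _) hle.
have hb := @ineq_b m d1 d2 m2 hd (ltnW hle).
have [g gg] := IH d1 (@ineq_a m d1 d2 m2 hd) (m * d1 - d2)%N hb.
have [rf gh] := reflect_good m2 gg.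
apply: (compress (T := cokermx (\sum_(k < m) g k *m Eb d1 k))) gh.
  by move=> k; exact: submxMl.
rewrite mxrank_coker (eqP rf).
by rewrite subKn // ltnW.
Qed.

Unset Implicit Arguments.

Theorem lemma3p3 (F : closedFieldType) (m d1 d2 e1 e2 : nat) :
  (2 <= m)%N ->
  (e1, e2) != (0%N, 0%N) ->
  (e1 <= d1)%N -> (e2 <= d2)%N ->
  beta m * d1%:R < d2%:R ->
  subrep_arrow F m e1 e2 d1 d2 ->
  beta m * e1%:R < e2%:R.
Proof.
move=> m2 e0 _ _ hd hs.
have [f gf] := @exists_good F m m2 d2 d1 hd.
case: (posnP e1) => [z1 | p1].
  rewrite z1 mulr0 ltr0n lt0n.
  by apply: contraNneq e0 => ->; rewrite z1.
have [U1 [U2 [r1 r2 sub]]] := hs f.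
have := gf _ U1; rewrite r1 => /(_ p1) h.
apply: lt_le_trans h _.
rewrite ler_nat -r2; apply: mxrankS; exact: img_sub.
Qed.
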